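(* For every integer $n>2$, $\delta(n) < n/2$.
   Context: A double-$n$ string is a string of length $2n$ over an alphabet of $n$ symbols in which each symbol appears exactly twice. Positions in the string are numbered $1,\dots,2n$. The distance between two distinct symbols is the minimum, over an occurrence of the first symbol and an occurrence of the second, of the absolute difference of their positions (so adjacent entries have distance $1$). The diameter of a double-$n$ string ($n\ge 2$) is the maximum of the distance over all pairs of distinct symbols. $\delta(n)$ denotes the minimum diameter over all double-$n$ strings. *)

(* Defs.v *)
From mathcomp Require Import all_boot.
Set Implicit Arguments. Unset Strict Implicit. Unset Printing Implicit Defensive.

(* A string of length 2n over the alphabet 'I_n; positions 0..2n-1
   (a shift of the paper's 1..2n, which does not affect differences). *)
Definition dstring (n : nat) := {ffun 'I_(2 * n) -> 'I_n}.

Definition is_double (n : nat) (s : dstring n) : bool :=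
  [forall a : 'I_n, #|[pred i | s i == a]| == 2].

Definition absdiff (i j : nat) : nat := (i - j) + (j - i).

(* distance between symbols a and b: min over occurrences of |i - j|
   (default 2n is an upper bound on all differences, and is never reached
   for symbols that occur) *)
Definition dist (n : nat) (s : dstring n) (a b : 'I_n) : nat :=
  \big[minn/(2 * n)]_(i : 'I_(2 * n) | s i == a)
    \big[minn/(2 * n)]_(j : 'I_(2 * n) | s j == b) absdiff i j.

Definition diameter (n : nat) (s : dstring n) : nat :=
  \max_(a : 'I_n) \max_(b : 'I_n | a != b) dist s a b.

(* delta n: minimum diameter over all double-n strings (default 2n is
   an upper bound on every diameter; double-n strings exist for all n) *)
Definition delta (n : nat) : nat :=
  \big[minn/(2 * n)]_(s : dstring n | is_double s) diameter s.

(* Main.v *)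
Require Import Defs.
From mathcomp Require Import all_boot.
From mathcomp Require Import zify.

Lemma bigmin_le_term (I : finType) (P : pred I) (F : I -> nat) x j :
  P j -> \big[minn/x]_(i | P i) F i <= F j.
Proof.
move=> Pj; rewrite -big_filter.
have : j \in [seq i <- index_enum I | P i] by rewrite mem_filter Pj mem_index_enum.
elim: (filter _ _) => //= y s IH; rewrite big_cons in_cons.
case/orP => [/eqP->|/IH H]; first exact: geq_minl.
exact: leq_trans (geq_minr _ _) H.
Qed.

Lemma dist_le n (s : dstring n) a b i j : s i == a -> s j == b ->
  dist s a b <= absdiff i j.
Proof.
move=> si sj; rewrite /dist.
apply: leq_trans (@bigmin_le_term _ _ (fun i : 'I_(2 * n) => \big[minn/(2 * n)]_(j | s j == b) absdiff i j) _ _ si) _.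
exact: (@bigmin_le_term _ _ (fun j : 'I_(2 * n) => absdiff i j) _ _ sj).
Qed.

Definition pp (m k : nat) := if k == 0 then 0 else if k < m then k.+1
  else if k == m then 1 else k.
Definition qq (m a : nat) := if a == 0 then 0 else if a == 1 then m
  else if a <= m then a.-1 else a.

Lemma pp_lt m n k : 1 <= m -> m < n -> k < n -> pp m k < n.
Proof. rewrite /pp; do ! case: ifP => ? ; lia. Qed.

Lemma pp_eq m n k a : 1 <= m -> m < n -> k < n -> a < n ->
  (pp m k == a) = (k == qq m a).
Proof.
move=> *; rewrite /pp /qq; do ! case: ifP => ?; apply/eqP/eqP; lia.
Qed.

Lemma witness n m a b : 2 * m <= n <= 2 * m + 1 -> 3 <= n -> a < n -> b < n -> a != b ->
  exists x y : bool, 2 * absdiff (if x then a else n + qq m a)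
                                 (if y then b else n + qq m b) < n.
Proof.
move=> Hm Hn Ha Hb Hab.
wlog lt_ab : a b Ha Hb Hab / a < b.
  move=> W; case: (ltngtP a b) => [h|h|h]; first exact: W.
  - have := W b a Hb Ha; rewrite eq_sym => /(_ Hab h) [x [y H]].
    by exists y, x; rewrite /absdiff addnC.
  - by rewrite h eqxx in Hab.
rewrite /absdiff /qq.
case: (leqP (2 * (b - a)) (n - 1)) => h.
  by exists true, true; lia.
case: (a =P 0) => [a0|a0].
  case: (leqP b m) => hb.
    exists false, false; repeat (case: ifP => ?); lia.
  exists false, true; repeat (case: ifP => ?); lia.
case: (a =P 1) => [a1|a1].
  exists false, false; repeat (case: ifP => ?); lia.
exists false, true; repeat (case: ifP => ?); lia.
Qed.

Lemma qq_lt m n a : 1 <= m -> m < n -> a < n -> qq m a < n.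
Proof. rewrite /qq; repeat (case: ifP => ?); lia. Qed.

Theorem lemma3p1 (n : nat) : 2 < n -> 2 * delta n < n.
Proof.
case: n => [|n'] // Hn.
set N := n'.+1.
set m := N %/ 2.
have Hm : 2 * m <= N <= 2 * m + 1 by rewrite /m; lia.
have m1 : 1 <= m by lia.
have mN : m < N by lia.
pose s : dstring N := [ffun i : 'I_(2 * N) =>
  inord (if i < N then val i else pp m (val i - N)) : 'I_n'.+1].
have val_s : forall i : 'I_(2 * N),
    val (s i) = if i < N then val i else pp m (val i - N).
  move=> i; rewrite ffunE /= inordK //; case: ifP => h //.
  have := ltn_ord i; move=> hi.
  apply: (@pp_lt m N); lia.
have key : forall (i : 'I_(2 * N)) (a : 'I_N),
    (s i == a) = (val i == val a) || (val i == N + qq m a).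
  move=> i a; rewrite -val_eqE /= val_s.
  have := ltn_ord i; have := ltn_ord a; have := (@qq_lt m N a m1 mN (ltn_ord a)).
  move=> hq ha hi.
  case: ifP => h.
    apply/eqP/orP; [move=> ?; left; apply/eqP; simpl in *; lia | case=> /eqP; simpl in *; lia].
  simpl in *; rewrite (@pp_eq m N); try lia.
have pos : forall (x : bool) (a : 'I_N), {i : 'I_(2 * N) | s i == a &
    val i = if x then val a else N + qq m a}.
  move=> x a.
  have := (@qq_lt m N a m1 mN (ltn_ord a)); have := ltn_ord a => ha hq.
  have hlt : (if x then val a else N + qq m a) < 2 * N by case: x; simpl in *; lia.
  exists (Ordinal hlt) => //.
  rewrite key /=; case: (x) hlt => _; rewrite eqxx ?orbT //.
have dbl : is_double s.
  apply/forallP => a; apply/eqP.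
  have := (@qq_lt m N a m1 mN (ltn_ord a)); have := ltn_ord a => ha hq.
  have [i1 _ v1] := pos true a.
  have [i2 _ v2] := pos false a.
  rewrite (@eq_card _ _ (mem [set i1; i2])); last first.
    move=> i; rewrite !inE key -!val_eqE v1 v2 //.
  have ne : i1 != i2 by rewrite -val_eqE v1 v2 /=; apply/eqP; simpl in *; lia.
  by rewrite cards2 ne.
have diam : diameter s <= n' %/ 2.
  apply/bigmax_leqP => a _; apply/bigmax_leqP => b hab.
  have [x [y H]] := @witness N m a b Hm Hn (ltn_ord a) (ltn_ord b) hab.
  have [i si vi] := pos x a.
  have [j sj vj] := pos y b.
  apply: leq_trans (@dist_le N s a b i j si sj) _.
  rewrite vi vj; simpl in *; lia.
have : delta N <= diameter s by exact: bigmin_le_term.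
lia.
Qed.
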